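(* Let $A\| B$ be a right D2 extension, and let $\beta:\mathcal E\otimes_{\rho(A)}\mathcal E\to S\otimes_R\mathcal E$, $\beta(f\otimes g)=f_{(-1)}\otimes f_{(0)}\circ g$, be the Galois map of the left $S$-comodule algebra $\mathcal E$ (coaction $\varrho(f)=\sum_j\gamma_j\otimes_Ru_j^1f(u_j^2-)$). Then $\beta$ restricts to a bijection $(\mathcal E\otimes_{\rho(A)}\mathcal E)^{\rho(A)}\to S$, $U^1\otimes U^2\mapsto\big(x\mapsto U^1(xU^2(1))\big)$, which is an algebra isomorphism when $(\mathcal E\otimes_{\rho(A)}\mathcal E)^{\rho(A)}$ is given the multiplication $U\cdot V=U^1\circ V^1\otimes V^2\circ U^2$ (the opposite of the multiplication $T(\mathcal E\| \rho(A))$ carries); moreover it commutes with source, target, counit and comultiplication maps, so it is an isomorphism of left bialgebroids $T(\mathcal E\| \rho(A))^{\mathrm{op}}\cong S$ (the base $\mathcal E^{\rho(A)}=\mathrm{End}({}_BA_A)$ being identified with $R$ via $f\mapsto f(1)$).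
   Context: Algebras over a commutative ring $K$; $A\| B$ is a unit-preserving homomorphism $B\to A$; $R=A^B$; $S=\mathrm{End}({}_BA_B)$, $\mathcal E=\mathrm{End}({}_BA)$ (composition); $T(C\| D)=(C\otimes_DC)^D$ for an extension $C\| D$, with Sweedler notation $t=t^1\otimes t^2$ and multiplication $tt'={t'}^1t^1\otimes t^2{t'}^2$; $\rho(a)(x)=xa$, $\lambda(a)(x)=ax$. $A\| B$ is right D2 if $A\otimes_BA$ is isomorphic as $A$-$B$-bimodule to a direct summand of some $A^n$, equivalently there are finitely many $\gamma_j\in S,u_j\in T(A\| B)$ with $a\otimes_Ba'=\sum_ja\gamma_j(a')u_j^1\otimes u_j^2$. $S$ is a left $R$-bialgebroid (source $\lambda|_R$, target $\rho|_R$, counit $\alpha\mapsto\alpha(1)$, comultiplication $\Delta(\alpha)=\sum_j\gamma_j\otimes_Ru_j^1\alpha(u_j^2-)$); $T(C\| D)$ is a right bialgebroid over the centralizer $C^D$ (source $r\mapsto1\otimes r$, target $r\mapsto r\otimes1$, counit $t\mapsto t^1t^2$), and $T(C\| D)^{\mathrm{op}}$ with source and target exchanged is a left bialgebroid. *)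

(* Defs.v *)
From mathcomp Require Import all_boot all_algebra.
Set Implicit Arguments. Unset Strict Implicit. Unset Printing Implicit Defensive.
Import GRing.Theory.
Local Open Scope ring_scope.

(* An element of M (x)_R N is represented by a finite formal sum             *)
(* s = [:: (m1,n1); ...; (mk,nk)] meaning  sum_i m_i (x) n_i.                *)
(* [tens_eq] is the congruence of the free commutative monoid on pairs       *)
(* generated by bi-additivity, zero and R-balancing; the quotient is          *)
(* (isomorphic to) the usual tensor product M (x)_R N.  The modules are given *)
(* as subsets (predicates PM, PN) of ambient types, and R-scalars as a subset *)
(* PR; only elements of these subsets enter the generating relations.         *)
Definition all_prop (T : Type) (P : T -> Prop) (s : seq T) : Prop :=
  foldr (fun x acc => P x /\ acc) True s.

Section Tensor.
Variables (M N R : Type) (PM : M -> Prop) (PN : N -> Prop) (PR : R -> Prop).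
Variables (addM : M -> M -> M) (addN : N -> N -> N) (zM : M) (zN : N).
Variables (actM : M -> R -> M) (actN : R -> N -> N).

Inductive tens_gen : seq (M * N) -> seq (M * N) -> Prop :=
| tg_addl m m' n : PM m -> PM m' -> PN n ->
    tens_gen [:: (addM m m', n)] [:: (m, n); (m', n)]
| tg_addr m n n' : PM m -> PN n -> PN n' ->
    tens_gen [:: (m, addN n n')] [:: (m, n); (m, n')]
| tg_zl n : PN n -> tens_gen [:: (zM, n)] [::]
| tg_zr m : PM m -> tens_gen [:: (m, zN)] [::]
| tg_bal m r n : PM m -> PR r -> PN n ->
    tens_gen [:: (actM m r, n)] [:: (m, actN r n)].

Inductive tens_eq : seq (M * N) -> seq (M * N) -> Prop :=
| te_gen s t : tens_gen s t -> tens_eq s t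
| te_refl s : tens_eq s s
| te_sym s t : tens_eq s t -> tens_eq t s
| te_trans s t u : tens_eq s t -> tens_eq t u -> tens_eq s u
| te_cat s s' t t' : tens_eq s s' -> tens_eq t t' -> tens_eq (s ++ t) (s' ++ t')
| te_comm s t : tens_eq (s ++ t) (t ++ s).
End Tensor.

Section Tensor3.
Variables (M R : Type) (PM : M -> Prop) (PR : R -> Prop).
Variables (addM : M -> M -> M) (zM : M).
Variables (actr : M -> R -> M) (actl : R -> M -> M).

Inductive tens3_gen : seq (M * M * M) -> seq (M * M * M) -> Prop :=
| t3_add1 m m' n p : PM m -> PM m' -> PM n -> PM p ->
    tens3_gen [:: (addM m m', n, p)] [:: (m, n, p); (m', n, p)]
| t3_add2 m n n' p : PM m -> PM n -> PM n' -> PM p ->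
    tens3_gen [:: (m, addM n n', p)] [:: (m, n, p); (m, n', p)]
| t3_add3 m n p p' : PM m -> PM n -> PM p -> PM p' ->
    tens3_gen [:: (m, n, addM p p')] [:: (m, n, p); (m, n, p')]
| t3_z1 n p : PM n -> PM p -> tens3_gen [:: (zM, n, p)] [::]
| t3_z2 m p : PM m -> PM p -> tens3_gen [:: (m, zM, p)] [::]
| t3_z3 m n : PM m -> PM n -> tens3_gen [:: (m, n, zM)] [::]
| t3_bal1 m r n p : PM m -> PR r -> PM n -> PM p ->
    tens3_gen [:: (actr m r, n, p)] [:: (m, actl r n, p)]
| t3_bal2 m n r p : PM m -> PM n -> PR r -> PM p ->
    tens3_gen [:: (m, actr n r, p)] [:: (m, n, actl r p)].

Inductive tens3_eq : seq (M * M * M) -> seq (M * M * M) -> Prop :=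
| t3e_gen s t : tens3_gen s t -> tens3_eq s t
| t3e_refl s : tens3_eq s s
| t3e_sym s t : tens3_eq s t -> tens3_eq t s
| t3e_trans s t u : tens3_eq s t -> tens3_eq t u -> tens3_eq s u
| t3e_cat s s' t t' :
    tens3_eq s s' -> tens3_eq t t' -> tens3_eq (s ++ t) (s' ++ t')
| t3e_comm s t : tens3_eq (s ++ t) (t ++ s).
End Tensor3.

(* The extension A | B given by a unit-preserving ring map i : B -> A.       *)
Section Extension.
Variables (A B : pzRingType) (i : B -> A).

Definition is_add (f : A -> A) := forall x y, f (x + y) = f x + f y.
Definition isE (f : A -> A) := is_add f /\ forall b x, f (i b * x) = i b * f x.
Definition isS (f : A -> A) := isE f /\ forall b x, f (x * i b) = f x * i b.
Definition inR (r : A) := forall b, i b * r = r * i b.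

Definition rho (a : A) : A -> A := fun x => x * a.
Definition lam (a : A) : A -> A := fun x => a * x.
Definition fadd (f g : A -> A) : A -> A := fun x => f x + g x.
Definition fzero : A -> A := fun _ => 0.

Definition teqAB : seq (A * A) -> seq (A * A) -> Prop :=
  tens_eq (fun _ : A => True) (fun _ : A => True) (fun _ : B => True)
    +%R +%R 0 0 (fun a b => a * i b) (fun b a => i b * a).
Definition inT_AB (u : seq (A * A)) :=
  forall b, teqAB [seq (i b * p.1, p.2) | p <- u] [seq (p.1, p.2 * i b) | p <- u].

Definition right_D2_quasibase (qb : seq ((A -> A) * seq (A * A))) :=
  all_prop (fun q => isS q.1 /\ inT_AB q.2) qb /\
  forall a a', teqAB [:: (a, a')]
    (flatten [seq [seq (a * q.1 a' * p.1, p.2) | p <- q.2] | q <- qb]).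

Definition teqEE : seq ((A -> A) * (A -> A)) -> seq ((A -> A) * (A -> A)) -> Prop :=
  tens_eq isE isE (fun _ : A => True) fadd fadd fzero fzero
    (fun f a => f \o rho a) (fun a g => rho a \o g).
Definition EE_elt (U : seq ((A -> A) * (A -> A))) :=
  all_prop (fun p => isE p.1 /\ isE p.2) U.
Definition EE_inv (U : seq ((A -> A) * (A -> A))) :=
  EE_elt U /\ forall a,
    teqEE [seq (rho a \o p.1, p.2) | p <- U] [seq (p.1, p.2 \o rho a) | p <- U].
Definition EE_mul (U V : seq ((A -> A) * (A -> A))) :=
  [seq (p.1 \o q.1, q.2 \o p.2) | p <- U, q <- V].
Definition Phi (U : seq ((A -> A) * (A -> A))) : A -> A :=
  fun x => \sum_(p <- U) p.1 (x * p.2 1).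

Definition inEbase (f : A -> A) := isE f /\ forall a, f \o rho a = rho a \o f.

(* S (x)_R S and S (x)_R E: right R-action on S is al.r = rho r o al (target),
   left R-action is r.al = lam r o al (source) *)
Definition teqSS : seq ((A -> A) * (A -> A)) -> seq ((A -> A) * (A -> A)) -> Prop :=
  tens_eq isS isS inR fadd fadd fzero fzero
    (fun al r => rho r \o al) (fun r al => lam r \o al).
Definition teqSE : seq ((A -> A) * (A -> A)) -> seq ((A -> A) * (A -> A)) -> Prop :=
  tens_eq isS isE inR fadd fadd fzero fzero
    (fun al r => rho r \o al) (fun r al => lam r \o al).

Definition coactS (qb : seq ((A -> A) * seq (A * A))) (f : A -> A) :=
  [seq (q.1, fun x => \sum_(p <- q.2) p.1 * f (p.2 * x)) | q <- qb].
Definition DeltaS := coactS.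
Definition galois_map (qb : seq ((A -> A) * seq (A * A)))
    (U : seq ((A -> A) * (A -> A))) :=
  flatten [seq [seq (q.1, q.2 \o fg.2) | q <- coactS qb fg.1] | fg <- U].

Definition teqEEE : seq ((A -> A) * (A -> A) * (A -> A)) ->
    seq ((A -> A) * (A -> A) * (A -> A)) -> Prop :=
  tens3_eq isE (fun _ : A => True) fadd fzero
    (fun f a => f \o rho a) (fun a g => rho a \o g).
Definition TT_to_EEE (W : seq (seq ((A -> A) * (A -> A)) * seq ((A -> A) * (A -> A)))) :=
  flatten [seq [seq (p.1, p.2 \o q.1, q.2) | p <- w.1, q <- w.2] | w <- W].

End Extension.

(* Main.v *)
Require Import Defs.
From mathcomp Require Import all_boot all_algebra.
From Stdlib Require Import FunctionalExtensionality.
From Stdlib Require List.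
Set Implicit Arguments. Unset Strict Implicit. Unset Printing Implicit Defensive.
Import GRing.Theory.
Local Open Scope ring_scope.

Definition is_cong (X : Type) (teq : seq X -> seq X -> Prop) :=
  [/\ forall s, teq s s,
      forall s t, teq s t -> teq t s,
      forall s t u, teq s t -> teq t u -> teq s u,
      forall s s' t t', teq s s' -> teq t t' -> teq (s ++ t) (s' ++ t')
    & forall s t, teq (s ++ t) (t ++ s)].

Section Cong.
Variable X : Type.
Variable teq : seq X -> seq X -> Prop.
Hypothesis Hc : is_cong teq.

Let Hrefl : forall s, teq s s. Proof. by case: Hc. Qed.
Let Hsym : forall s t, teq s t -> teq t s. Proof. by case: Hc. Qed.
Let Htrans : forall s t u, teq s t -> teq t u -> teq s u. Proof. by case: Hc. Qed.
Let Hcat : forall s s' t t', teq s s' -> teq t t' -> teq (s ++ t) (s' ++ t').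
Proof. by case: Hc. Qed.
Let Hcomm : forall s t, teq (s ++ t) (t ++ s). Proof. by case: Hc. Qed.

Lemma cg_refl s : teq s s. Proof. exact: Hrefl. Qed.
Lemma cg_sym s t : teq s t -> teq t s. Proof. exact: Hsym. Qed.
Lemma cg_trans s t u : teq s t -> teq t u -> teq s u. Proof. exact: Htrans. Qed.
Lemma cg_cat s s' t t' : teq s s' -> teq t t' -> teq (s ++ t) (s' ++ t').
Proof. exact: Hcat. Qed.

Lemma cg_cons x y s t : teq [:: x] [:: y] -> teq s t -> teq (x :: s) (y :: t).
Proof. move=> H1 H2; exact: (Hcat H1 H2). Qed.

Lemma cg_flatten (T : Type) (F G : T -> seq X) (s : seq T) :
  (forall x, List.In x s -> teq (F x) (G x)) ->
  teq (flatten (map F s)) (flatten (map G s)).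
Proof.
elim: s => [|x s IH] H /=; first exact: Hrefl.
apply: Hcat; first by apply: H; left.
by apply: IH => y Hy; apply: H; right.
Qed.

Lemma cg_map (T : Type) (f g : T -> X) (s : seq T) :
  (forall x, List.In x s -> teq [:: f x] [:: g x]) ->
  teq (map f s) (map g s).
Proof.
elim: s => [|x s IH] H /=; first exact: Hrefl.
apply: cg_cons; first by apply: H; left.
by apply: IH => y Hy; apply: H; right.
Qed.

Lemma cg_swap b s t : teq (b :: (s ++ t)) (s ++ b :: t).
Proof.
have -> : b :: (s ++ t) = ([:: b] ++ s) ++ t by [].
have -> : s ++ b :: t = (s ++ [:: b]) ++ t by rewrite -catA.
by apply: Hcat; [apply: Hcomm | apply: Hrefl].
Qed.

Lemma cg_zip (T : Type) (h f g : T -> X) (s : seq T) :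
  (forall x, List.In x s -> teq [:: h x] [:: f x; g x]) ->
  teq (map h s) (map f s ++ map g s).
Proof.
elim: s => [|x s IH] H /=; first exact: Hrefl.
have H1 : teq [:: h x] [:: f x; g x] by apply: H; left.
have H2 : teq (map h s) (map f s ++ map g s) by apply: IH => y Hy; apply: H; right.
apply: Htrans (Hcat H1 H2) _ => /=.
apply: cg_cons; first exact: Hrefl.
exact: cg_swap.
Qed.

Lemma cg_zero (T : Type) (f : T -> X) (s : seq T) :
  (forall x, List.In x s -> teq [:: f x] [::]) -> teq (map f s) [::].
Proof.
elim: s => [|x s IH] H /=; first exact: Hrefl.
have H1 : teq [:: f x] [::] by apply: H; left.
have H2 : teq (map f s) [::] by apply: IH => y Hy; apply: H; right.
exact: (Hcat H1 H2).
Qed.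

Section Sum.
Variables (Y K : Type) (pair : Y -> K -> X) (plus : Y -> Y -> Y) (zero : Y).
Variables (P : Y -> Prop) (Q : K -> Prop).
Hypothesis Hplus : forall a b k, P a -> P b -> Q k ->
  teq [:: pair (plus a b) k] [:: pair a k; pair b k].
Hypothesis Hzero : forall k, Q k -> teq [:: pair zero k] [::].
Hypothesis HPplus : forall a b, P a -> P b -> P (plus a b).
Hypothesis HPzero : P zero.

Lemma P_foldr (s : seq Y) : (forall a, List.In a s -> P a) -> P (foldr plus zero s).
Proof.
elim: s => [|a s IH] H //=; apply: HPplus; first by apply: H; left.
by apply: IH => b Hb; apply: H; right.
Qed.

Lemma cg_fold (T : Type) (F : T -> Y) (k : K) (s : seq T) :
  Q k -> (forall x, List.In x s -> P (F x)) ->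
  teq (map (fun x => pair (F x) k) s) [:: pair (foldr plus zero (map F s)) k].
Proof.
move=> Qk; elim: s => [|x s IH] H /=; first by apply: Hsym; apply: Hzero.
have H1 : P (F x) by apply: H; left.
have H2 : forall y, List.In y s -> P (F y) by move=> y Hy; apply: H; right.
apply: Htrans (cg_cons (Hrefl [:: pair (F x) k]) (IH H2)) _.
apply: Hsym; apply: Hplus => //.
apply: P_foldr => a /List.in_map_iff [y [<- Hy]]; exact: H2.
Qed.

Lemma cg_collect (T : Type) (F : T -> K -> Y) (s : seq T) (ks : seq K) :
  (forall k, List.In k ks -> Q k) ->
  (forall x k, List.In x s -> List.In k ks -> P (F x k)) ->
  teq (flatten [seq [seq pair (F x k) k | k <- ks] | x <- s])
      [seq pair (foldr plus zero [seq F x k | x <- s]) k | k <- ks].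
Proof.
move=> HQ; elim: s => [|x s IH] H /=.
  by apply: Hsym; apply: cg_zero => k Hk; apply: Hzero; apply: HQ.
have H2 : forall y k, List.In y s -> List.In k ks -> P (F y k).
  by move=> y k Hy Hk; apply: H => //; right.
apply: Htrans (Hcat (Hrefl _) (IH H2)) _.
apply: Hsym; apply: cg_zip => k Hk; apply: Hplus; last exact: HQ.
- by apply: H => //; left.
- apply: P_foldr => a /List.in_map_iff [y [<- Hy]]; exact: H2.
Qed.
End Sum.
End Cong.

Lemma tens_is_cong M N R PM PN PR addM addN zM zN actM actN :
  is_cong (@tens_eq M N R PM PN PR addM addN zM zN actM actN).
Proof.
split; [exact: te_refl | exact: te_sym | exact: te_trans | exact: te_cat | exact: te_comm].
Qed.

Lemma tens3_is_cong M R PM PR addM zM actr actl :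
  is_cong (@tens3_eq M R PM PR addM zM actr actl).
Proof.
split; [exact: t3e_refl | exact: t3e_sym | exact: t3e_trans | exact: t3e_cat | exact: t3e_comm].
Qed.

Lemma tens_eval M N R PM PN PR addM addN zM zN actM actN (Z : zmodType)
   (phi : M * N -> Z) :
  (forall m m' n, PM m -> PM m' -> PN n -> phi (addM m m', n) = phi (m, n) + phi (m', n)) ->
  (forall m n n', PM m -> PN n -> PN n' -> phi (m, addN n n') = phi (m, n) + phi (m, n')) ->
  (forall n, PN n -> phi (zM, n) = 0) ->
  (forall m, PM m -> phi (m, zN) = 0) ->
  (forall m r n, PM m -> PR r -> PN n -> phi (actM m r, n) = phi (m, actN r n)) ->
  forall s t, @tens_eq M N R PM PN PR addM addN zM zN actM actN s t ->
  \sum_(p <- s) phi p = \sum_(p <- t) phi p.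
Proof.
move=> H1 H2 H3 H4 H5 s t; elim => {s t}.
- move=> s t [] *; rewrite ?big_cons ?big_nil ?addr0; auto.
- by [].
- by move=> s t _ ->.
- by move=> s t u _ -> _ ->.
- by move=> s s' t t' _ E1 _ E2; rewrite !big_cat E1 E2.
- by move=> s t; rewrite big_cat [in RHS]big_cat; apply: addrC.
Qed.

Lemma tens3_eval M R PM PR addM zM actr actl (Z : zmodType) (phi : M * M * M -> Z) :
  (forall m m' n p, PM m -> PM m' -> PM n -> PM p -> phi (addM m m', n, p) = phi (m, n, p) + phi (m', n, p)) ->
  (forall m n n' p, PM m -> PM n -> PM n' -> PM p -> phi (m, addM n n', p) = phi (m, n, p) + phi (m, n', p)) ->
  (forall m n p p', PM m -> PM n -> PM p -> PM p' -> phi (m, n, addM p p') = phi (m, n, p) + phi (m, n, p')) ->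
  (forall n p, PM n -> PM p -> phi (zM, n, p) = 0) ->
  (forall m p, PM m -> PM p -> phi (m, zM, p) = 0) ->
  (forall m n, PM m -> PM n -> phi (m, n, zM) = 0) ->
  (forall m r n p, PM m -> PR r -> PM n -> PM p -> phi (actr m r, n, p) = phi (m, actl r n, p)) ->
  (forall m n r p, PM m -> PM n -> PR r -> PM p -> phi (m, actr n r, p) = phi (m, n, actl r p)) ->
  forall s t, @tens3_eq M R PM PR addM zM actr actl s t ->
  \sum_(p <- s) phi p = \sum_(p <- t) phi p.
Proof.
move=> H1 H2 H3 H4 H5 H6 H7 H8 s t; elim => {s t}.
- move=> s t [] *; rewrite ?big_cons ?big_nil ?addr0; auto.
- by [].
- by move=> s t _ ->.
- by move=> s t u _ -> _ ->.
- by move=> s s' t t' _ E1 _ E2; rewrite !big_cat E1 E2.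
- by move=> s t; rewrite big_cat [in RHS]big_cat; apply: addrC.
Qed.

Lemma all_propP (T : Type) (P : T -> Prop) s :
  all_prop P s <-> forall x, List.In x s -> P x.
Proof.
elim: s => [|x s IH] /=; first by split.
split.
- by case=> Hx /IH H y [<-|Hy] //; apply: H.
- by move=> H; split; [apply: H; left | apply/IH => y Hy; apply: H; right].
Qed.

Section Base.
Variable A : pzRingType.
Lemma add0 (f : A -> A) : is_add f -> f 0 = 0.
Proof.
move=> H; have := H 0 0; rewrite addr0 => /(congr1 (fun z => z - f 0)).
by rewrite addrK subrr.
Qed.

Lemma add_sum (T : Type) (f : A -> A) (s : seq T) (F : T -> A) : is_add f ->
  f (\sum_(x <- s) F x) = \sum_(x <- s) f (F x).
Proof.
move=> H; elim: s => [|x s IH]; first by rewrite !big_nil add0.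
by rewrite !big_cons H IH.
Qed.

Definition fsum (fs : seq (A -> A)) := foldr (@fadd A) (@fzero A) fs.
Lemma fsum_eval fs x : fsum fs x = \sum_(f <- fs) f x.
Proof.
elim: fs => [|f fs IH]; first by rewrite big_nil.
by rewrite big_cons -IH.
Qed.
Definition Ut (U : seq ((A -> A) * (A -> A))) x y := \sum_(p <- U) p.1 (x * p.2 y).
Lemma Phi_Ut U x : Phi U x = Ut U x 1.
Proof. by []. Qed.
End Base.

Section Alg.
Variables (A B : pzRingType) (i : B -> A).

Lemma isE_fadd f g : isE i f -> isE i g -> isE i (fadd f g).
Proof.
move=> [Hf1 Hf2] [Hg1 Hg2]; split.
  by move=> x y; rewrite /fadd Hf1 Hg1 addrACA.
by move=> b x; rewrite /fadd Hf2 Hg2 mulrDr.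
Qed.
Lemma isE_fzero : isE i (@fzero A).
Proof. by split=> [x y|b x]; rewrite /fzero ?addr0 ?mulr0. Qed.
Lemma isE_comp f g : isE i f -> isE i g -> isE i (f \o g).
Proof.
move=> [Hf1 Hf2] [Hg1 Hg2]; split=> [x y|b x] /=; first by rewrite Hg1 Hf1.
by rewrite Hg2 Hf2.
Qed.
Lemma isE_rho a : isE i (rho a).
Proof. by split=> [x y|b x]; rewrite /rho ?mulrDl ?mulrA. Qed.
Lemma isE_id : isE i (idfun : A -> A).
Proof. by []. Qed.
Lemma isE_rhol a f : isE i f -> isE i (rho a \o f).
Proof. by move=> H; apply: isE_comp => //; apply: isE_rho. Qed.
Lemma isE_rhor a f : isE i f -> isE i (f \o rho a).
Proof. by move=> H; apply: isE_comp => //; apply: isE_rho. Qed.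
Lemma isS_E f : isS i f -> isE i f.
Proof. by case. Qed.

Lemma teqAB_eval (Z : zmodType) (phi : A -> A -> Z) :
  (forall a a' a'', phi (a + a') a'' = phi a a'' + phi a' a'') ->
  (forall a a' a'', phi a (a' + a'') = phi a a' + phi a a'') ->
  (forall a, phi 0 a = 0) -> (forall a, phi a 0 = 0) ->
  (forall a b a', phi (a * i b) a' = phi a (i b * a')) ->
  forall s t, teqAB i s t -> \sum_(p <- s) phi p.1 p.2 = \sum_(p <- t) phi p.1 p.2.
Proof.
move=> H1 H2 H3 H4 H5 s t; apply: (tens_eval (phi := fun p => phi p.1 p.2)); simpl; auto.
Qed.

Lemma Ut_teq U V : teqEE i U V -> forall x y, Ut U x y = Ut V x y.
Proof.
move=> H x y; rewrite /Ut.
apply: (tens_eval (phi := fun p => p.1 (x * p.2 y))) H => /=.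
- by [].
- by move=> m n n' [Hm _] _ _; rewrite /fadd mulrDr Hm.
- by [].
- by move=> m [Hm _]; rewrite /fzero mulr0 add0.
- by move=> m r n _ _ _; rewrite /rho mulrA.
Qed.

Lemma INV1 U : EE_inv i U -> forall x y, Ut U x y = Phi U x * y.
Proof.
move=> [_ H] x y; have := Ut_teq (H y) x 1.
rewrite /Ut !big_map /= /rho mulr_suml => E.
rewrite E; by apply: eq_bigr => p _; rewrite mul1r.
Qed.

End Alg.

Section D2.
Variables (A B : pzRingType) (i : B -> A) (qb : seq ((A -> A) * seq (A * A))).
Hypothesis HD2 : right_D2_quasibase i qb.

Definition Lq := flatten [seq [seq (p, q.1) | p <- q.2] | q <- qb].

Lemma sum_L (Z : zmodType) (H : (A * A) * (A -> A) -> Z) :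
  \sum_(k <- Lq) H k = \sum_(q <- qb) \sum_(p <- q.2) H (p, q.1).
Proof. by rewrite big_flatten big_map; apply: eq_bigr => q _; rewrite big_map. Qed.

Lemma qb_prop q : List.In q qb -> isS i q.1 /\ inT_AB i q.2.
Proof. by move: HD2 => [/all_propP H _]; apply: H. Qed.

Lemma In_flatten (T U : Type) (F : T -> seq U) s x :
  List.In x (flatten (map F s)) -> exists y, List.In y s /\ List.In x (F y).
Proof.
elim: s => [|y s IH] //= /List.in_app_iff [H|H]; first by exists y; split; [left|].
by case: (IH H) => z [H1 H2]; exists z; split; [right|].
Qed.

Lemma In_L k : List.In k Lq -> isS i k.2.
Proof.
rewrite /Lq => Hk; have [q [Hq Hk']] := In_flatten Hk.
move: Hk' => /List.in_map_iff [p [Ep _]]; rewrite -Ep /=.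
by case: (qb_prop Hq).
Qed.

Lemma D2_eval (Z : zmodType) (phi : A -> A -> Z) :
  (forall a a' a'', phi (a + a') a'' = phi a a'' + phi a' a'') ->
  (forall a a' a'', phi a (a' + a'') = phi a a' + phi a a'') ->
  (forall a, phi 0 a = 0) -> (forall a, phi a 0 = 0) ->
  (forall a b a', phi (a * i b) a' = phi a (i b * a')) ->
  forall a a', phi a a' = \sum_(k <- Lq) phi (a * k.2 a' * k.1.1) k.1.2.
Proof.
move=> H1 H2 H3 H4 H5 a a'; move: HD2 => [_ /(_ a a') E].
have := teqAB_eval H1 H2 H3 H4 H5 E.
rewrite big_cons big_nil addr0 /= => ->.
rewrite sum_L big_flatten big_map; apply: eq_bigr => q _; by rewrite big_map.
Qed.

Lemma D2_evalA (phi : A -> A -> A) :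
  (forall a a' a'', phi (a + a') a'' = phi a a'' + phi a' a'') ->
  (forall a a' a'', phi a (a' + a'') = phi a a' + phi a a'') ->
  (forall a, phi 0 a = 0) -> (forall a, phi a 0 = 0) ->
  (forall a b a', phi (a * i b) a' = phi a (i b * a')) ->
  forall a a', phi a a' = \sum_(k <- Lq) phi (a * k.2 a' * k.1.1) k.1.2.
Proof. exact: (@D2_eval A). Qed.

Lemma expand_E g : isE i g ->
  g = fsum [seq rho (k.1.1 * g k.1.2) \o k.2 | k <- Lq].
Proof.
move=> [Hg1 Hg2]; apply: functional_extensionality => y.
rewrite fsum_eval big_map.
have E := @D2_evalA (fun a a' => a * g a') _ _ _ _ _ 1 y.
cbv beta in E; rewrite mul1r in E; rewrite E.
- apply: eq_bigr => k _; by rewrite /rho /= mul1r mulrA.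
- by move=> a a' a''; rewrite mulrDl.
- by move=> a a' a''; rewrite Hg1 mulrDr.
- by move=> a; rewrite mul0r.
- by move=> a; rewrite (add0 Hg1) mulr0.
- by move=> a b a'; rewrite Hg2 mulrA.
Qed.

End D2.

Section KEY.
Variables (A B : pzRingType) (i : B -> A) (qb : seq ((A -> A) * seq (A * A))).
Hypothesis HD2 : right_D2_quasibase i qb.
Notation Lq := (Lq qb).

Lemma EE_cong : is_cong (teqEE i). Proof. exact: tens_is_cong. Qed.
Lemma EE_addl m m' n : isE i m -> isE i m' -> isE i n ->
  teqEE i [:: (fadd m m', n)] [:: (m, n); (m', n)].
Proof. by move=> *; apply: te_gen; apply: tg_addl. Qed.
Lemma EE_addr m n n' : isE i m -> isE i n -> isE i n' ->
  teqEE i [:: (m, fadd n n')] [:: (m, n); (m, n')].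
Proof. by move=> *; apply: te_gen; apply: tg_addr. Qed.
Lemma EE_zl n : isE i n -> teqEE i [:: (@fzero A, n)] [::].
Proof. by move=> *; apply: te_gen; apply: tg_zl. Qed.
Lemma EE_zr m : isE i m -> teqEE i [:: (m, @fzero A)] [::].
Proof. by move=> *; apply: te_gen; apply: tg_zr. Qed.
Lemma EE_bal m a n : isE i m -> isE i n ->
  teqEE i [:: (m \o rho a, n)] [:: (m, rho a \o n)].
Proof. by move=> *; apply: te_gen; apply: tg_bal. Qed.

Lemma step1 f g : isE i f -> isE i g ->
  teqEE i [:: (f, g)] [seq (f \o rho (k.1.1 * g k.1.2), k.2) | k <- Lq].
Proof.
move=> Hf Hg.
apply: (cg_trans EE_cong (t := [seq (f, rho (k.1.1 * g k.1.2) \o k.2) | k <- Lq])).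
- rewrite {1}(expand_E HD2 Hg); apply: (cg_sym EE_cong).
  apply: (@cg_fold _ _ EE_cong _ _ (fun (a h : A -> A) => (h, a)) (@fadd A)
     (@fzero A) (isE i) (isE i) _ _ _ _ _
     (fun k : (A * A) * (A -> A) => rho (k.1.1 * g k.1.2) \o k.2) f Lq).
  + by move=> a b h Ha Hb Hh; apply: EE_addr.
  + by move=> h Hh; apply: EE_zr.
  + exact: isE_fadd.
  + exact: isE_fzero.
  + exact: Hf.
  + move=> k Hk; apply: isE_rhol; apply: isS_E; exact: In_L Hk.
- apply: (cg_map EE_cong) => k Hk; apply: (cg_sym EE_cong); apply: EE_bal => //.
  apply: isS_E; exact: In_L Hk.
Qed.

Lemma NF_EE U : EE_elt i U ->
  teqEE i U [seq (fun z => Ut U (z * k.1.1) k.1.2, k.2) | k <- Lq].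
Proof.
move=> /all_propP HU.
apply: (cg_trans EE_cong (t := flatten [seq [seq (fg.1 \o rho (k.1.1 * fg.2 k.1.2), k.2) | k <- Lq] | fg <- U])).
- rewrite -{1}(flatten_seq1 U).
  apply: (cg_flatten EE_cong) => fg Hfg; case: (HU fg Hfg) => Hf Hg.
  by case: fg {Hfg} Hf Hg => f g Hf Hg; apply: step1.
- have := @cg_collect _ _ EE_cong _ _ (fun (a : A -> A) (k : (A*A)*(A->A)) => (a, k.2))
    (@fadd A) (@fzero A) (isE i) (fun k => isE i k.2) _ _ _ _ _
    (fun fg k => fg.1 \o rho (k.1.1 * fg.2 k.1.2)) U Lq.
  move=> H; apply: (cg_trans EE_cong (H _ _ _ _ _ _)).
  + by move=> a b k Ha Hb Hk; apply: EE_addl.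
  + by move=> k Hk; apply: EE_zl.
  + exact: isE_fadd.
  + exact: isE_fzero.
  + by move=> k Hk; apply: isS_E; apply: In_L Hk.
  + move=> fg k Hfg Hk; apply: isE_rhor; by case: (HU fg Hfg).
  + apply: (cg_map EE_cong) => k _.
    match goal with |- teqEE _ [:: ?x] [:: ?y] => have -> : x = y end;
      last exact: (cg_refl EE_cong).
    congr pair; apply: functional_extensionality => z.
    rewrite -/(fsum _) fsum_eval big_map /Ut; apply: eq_bigr => fg _; by rewrite /rho /= mulrA.
Qed.

Lemma KEY2 U V : EE_elt i U -> EE_elt i V ->
  (forall x y, Ut U x y = Ut V x y) -> teqEE i U V.
Proof.
move=> HU HV E.
have E' : Ut U = Ut V.
  by apply: functional_extensionality => x; apply: functional_extensionality => y.
apply: (cg_trans EE_cong (NF_EE HU)); rewrite E'.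
exact: (cg_sym EE_cong (NF_EE HV)).
Qed.

Lemma EE_elt_map (F : (A -> A) * (A -> A) -> (A -> A) * (A -> A)) U :
  EE_elt i U -> (forall p, isE i p.1 -> isE i p.2 -> isE i (F p).1 /\ isE i (F p).2) ->
  EE_elt i (map F U).
Proof.
move=> /all_propP HU HF; apply/all_propP => q /List.in_map_iff [p [<- Hp]].
by case: (HU p Hp) => H1 H2; apply: HF.
Qed.

Lemma INV2 U : EE_elt i U -> (forall x y, Ut U x y = Ut U x 1 * y) -> EE_inv i U.
Proof.
move=> HU E; split => // a; apply: KEY2.
- by apply: EE_elt_map => // p H1 H2; split => //; apply: isE_rhol.
- by apply: EE_elt_map => // p H1 H2; split => //; apply: isE_rhor.
- move=> x y; rewrite /Ut !big_map /=.
  have E1 : \sum_(j <- U) rho a (j.1 (x * j.2 y)) = Ut U x y * a.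
    by rewrite /Ut mulr_suml.
  have E2 : \sum_(j <- U) j.1 (x * j.2 (rho a y)) = Ut U x (y * a) by [].
  by rewrite E1 E2 E [in RHS]E mulrA.
Qed.

End KEY.

Lemma sum_ext_in (A : pzRingType) (T : Type) (s : seq T) (F G : T -> A) :
  (forall x, List.In x s -> F x = G x) -> \sum_(x <- s) F x = \sum_(x <- s) G x.
Proof.
elim: s => [|x s IH] H; first by rewrite !big_nil.
rewrite !big_cons (H x); last by left.
by rewrite IH // => y Hy; apply: H; right.
Qed.

Section Parts.
Variables (A B : pzRingType) (i : B -> A) (qb : seq ((A -> A) * seq (A * A))).
Hypothesis HD2 : right_D2_quasibase i qb.
Notation Lq := (Lq qb).

Lemma partA U V : EE_elt i U -> EE_elt i V -> teqEE i U V -> Phi U = Phi V.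
Proof.
move=> _ _ H; apply: functional_extensionality => x.
by rewrite !Phi_Ut (Ut_teq H).
Qed.

Lemma partC U : EE_inv i U -> isS i (Phi U).
Proof.
move=> HU; have [/all_propP HE _] := HU.
split; first split.
- move=> x y; rewrite /Phi -big_split /=; apply: sum_ext_in => p Hp.
  by case: (HE p Hp) => [[H1 _] _]; rewrite mulrDl H1.
- move=> b x; rewrite /Phi mulr_sumr; apply: sum_ext_in => p Hp.
  by case: (HE p Hp) => [[_ H2] _]; rewrite -H2 mulrA.
- move=> b x; rewrite Phi_Ut -(INV1 HU) /Ut; apply: sum_ext_in => p Hp.
  case: (HE p Hp) => _ [_ H2]; by rewrite -{2}[i b]mulr1 H2 mulrA.
Qed.

Lemma partD U V : EE_inv i U -> EE_inv i V -> Phi U = Phi V -> teqEE i U V.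
Proof.
move=> HU HV E; apply: (KEY2 HD2); [by case: HU | by case: HV |].
by move=> x y; rewrite (INV1 HU) (INV1 HV) E.
Qed.

Definition Psi (al : A -> A) := [seq (fun z => al (z * k.1.1) * k.1.2, k.2) | k <- Lq].

Lemma Psi_Ut al : isS i al -> forall x y, Ut (Psi al) x y = al x * y.
Proof.
move=> [[Ha1 Ha2] Ha3] x y.
have E := @D2_evalA _ _ _ _ HD2 (fun a a' => al a * a') _ _ _ _ _ x y.
cbv beta in E; rewrite /Ut /Psi big_map E.
- by apply: eq_bigr => k _.
- by move=> a a' a''; rewrite Ha1 mulrDl.
- by move=> a a' a''; rewrite mulrDr.
- by move=> a; rewrite (add0 Ha1) mul0r.
- by move=> a; rewrite mulr0.
- by move=> a b a'; rewrite Ha3 mulrA.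
Qed.

Lemma Psi_inv al : isS i al -> EE_inv i (Psi al).
Proof.
move=> Hal; apply: (INV2 HD2).
- apply/all_propP => p /List.in_map_iff [k [<- Hk]] /=; split.
  + case: Hal => [[Ha1 Ha2] _]; split.
    * by move=> x y; rewrite mulrDl Ha1 mulrDl.
    * by move=> b x; rewrite -mulrA Ha2 mulrA.
  + by apply: isS_E; apply: (In_L HD2).
- by move=> x y; rewrite !(Psi_Ut Hal) mulr1.
Qed.

Lemma partE al : isS i al -> exists U, EE_inv i U /\ Phi U = al.
Proof.
move=> Hal; exists (Psi al); split; first exact: Psi_inv.
apply: functional_extensionality => x; by rewrite Phi_Ut (Psi_Ut Hal) mulr1.
Qed.

Lemma Ut_mul U V : EE_inv i U -> EE_inv i V ->
  forall x y, Ut (EE_mul U V) x y = Phi U (Phi V x) * y.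
Proof.
move=> HU HV x y; have [/all_propP HE _] := HU.
rewrite -(INV1 HU) /Ut /EE_mul big_flatten big_map.
apply: sum_ext_in => p Hp; case: (HE p Hp) => [[H1 _] _].
rewrite big_map /= -add_sum // -/(Ut V x (p.2 y)) (INV1 HV).
by rewrite -(INV1 HV) /Ut.
Qed.

Lemma partF U V : EE_inv i U -> EE_inv i V ->
  EE_inv i (EE_mul U V) /\ Phi (EE_mul U V) = Phi U \o Phi V.
Proof.
move=> HU HV; split.
- apply: (INV2 HD2).
  + apply/all_propP => w Hw; have [p [Hp Hq]] := In_flatten Hw.
    move: Hq => /List.in_map_iff [q [<- Hq]] /=.
    case: HU => /all_propP HU _; case: HV => /all_propP HV _.
    case: (HU p Hp) => H1 H2; case: (HV q Hq) => H3 H4.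
    by split; apply: isE_comp.
  + by move=> x y; rewrite !(Ut_mul HU HV) mulr1.
- apply: functional_extensionality => x.
  by rewrite Phi_Ut (Ut_mul HU HV) mulr1.
Qed.

Lemma partG : Phi [:: (idfun : A -> A, idfun : A -> A)] = idfun.
Proof.
apply: functional_extensionality => x.
by rewrite /Phi big_cons big_nil addr0 /= mulr1.
Qed.

Lemma base_lam f : inEbase i f -> forall x, f x = f 1 * x.
Proof.
move=> [_ H] x; have := congr1 (fun h => h 1) (H x).
by rewrite /= /rho mul1r.
Qed.

Lemma partH f : inEbase i f -> inR i (f 1) /\ f = lam (f 1).
Proof.
move=> Hf; split.
- move=> b; have [[_ H2] _] := Hf.
  by rewrite -(base_lam Hf) -H2 mulr1.
- by apply: functional_extensionality => x; rewrite (base_lam Hf).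
Qed.

Lemma partI r : inR i r -> inEbase i (lam r).
Proof.
move=> Hr; split; first split.
- by move=> x y; rewrite /lam mulrDr.
- by move=> b x; rewrite /lam mulrA -Hr mulrA.
- move=> a; apply: functional_extensionality => x.
  by rewrite /lam /rho /= mulrA.
Qed.

Lemma partJ f : inEbase i f ->
  Phi [:: (f, idfun)] = lam (f 1) /\ Phi [:: (idfun, f)] = rho (f 1).
Proof.
move=> Hf; split; apply: functional_extensionality => x;
  rewrite /Phi big_cons big_nil addr0 /=.
- by rewrite mulr1 (base_lam Hf).
- by [].
Qed.

Lemma partK U : EE_inv i U -> Phi U 1 = \sum_(p <- U) (p.1 \o p.2) 1.
Proof.
move=> _; rewrite /Phi; apply: eq_bigr => p _; by rewrite mul1r.
Qed.

End Parts.

Section Galois.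
Variables (A B : pzRingType) (i : B -> A) (qb : seq ((A -> A) * seq (A * A))).
Hypothesis HD2 : right_D2_quasibase i qb.
Notation Lq := (Lq qb).

Lemma inT_eval u (phi : A -> A -> A) :
  (forall a a' a'', phi (a + a') a'' = phi a a'' + phi a' a'') ->
  (forall a a' a'', phi a (a' + a'') = phi a a' + phi a a'') ->
  (forall a, phi 0 a = 0) -> (forall a, phi a 0 = 0) ->
  (forall a b a', phi (a * i b) a' = phi a (i b * a')) ->
  inT_AB i u -> forall b,
  \sum_(p <- u) phi (i b * p.1) p.2 = \sum_(p <- u) phi p.1 (p.2 * i b).
Proof.
move=> H1 H2 H3 H4 H5 Hu b.
have E := teqAB_eval H1 H2 H3 H4 H5 (Hu b).
by rewrite !big_map in E.
Qed.

Lemma isS_fadd f g : isS i f -> isS i g -> isS i (fadd f g).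
Proof.
move=> [Hf Hf3] [Hg Hg3]; split; first exact: isE_fadd.
by move=> b x; rewrite /fadd Hf3 Hg3 mulrDl.
Qed.
Lemma isS_fzero : isS i (@fzero A).
Proof. split; first exact: isE_fzero. by move=> b x; rewrite /fzero mul0r. Qed.
Lemma isS_rhol r f : inR i r -> isS i f -> isS i (rho r \o f).
Proof.
move=> Hr [Hf Hf3]; split; first exact: isE_rhol.
by move=> b x; rewrite /= /rho Hf3 -!mulrA Hr.
Qed.
Lemma isS_lam r f : inR i r -> isS i f -> isS i (lam r \o f).
Proof.
move=> Hr [[Hf1 Hf2] Hf3]; split; first split.
- by move=> x y; rewrite /= /lam Hf1 mulrDr.
- by move=> b x; rewrite /= /lam Hf2 !mulrA Hr.
- by move=> b x; rewrite /= /lam Hf3 mulrA.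
Qed.

Lemma SE_cong : is_cong (teqSE i). Proof. exact: tens_is_cong. Qed.
Lemma SE_addl m m' n : isS i m -> isS i m' -> isE i n ->
  teqSE i [:: (fadd m m', n)] [:: (m, n); (m', n)].
Proof. by move=> *; apply: te_gen; apply: tg_addl. Qed.
Lemma SE_addr m n n' : isS i m -> isE i n -> isE i n' ->
  teqSE i [:: (m, fadd n n')] [:: (m, n); (m, n')].
Proof. by move=> *; apply: te_gen; apply: tg_addr. Qed.
Lemma SE_zl n : isE i n -> teqSE i [:: (@fzero A, n)] [::].
Proof. by move=> *; apply: te_gen; apply: tg_zl. Qed.
Lemma SE_zr m : isS i m -> teqSE i [:: (m, @fzero A)] [::].
Proof. by move=> *; apply: te_gen; apply: tg_zr. Qed.
Lemma SE_bal m r n : isS i m -> inR i r -> isE i n ->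
  teqSE i [:: (rho r \o m, n)] [:: (m, lam r \o n)].
Proof. by move=> *; apply: te_gen; apply: tg_bal. Qed.

Definition rq (q : (A -> A) * seq (A * A)) (al : A -> A) :=
  \sum_(p <- q.2) p.1 * al p.2.

Lemma rq_inR q al : List.In q qb -> isS i al -> inR i (rq q al).
Proof.
move=> Hq [[Ha1 Ha2] Ha3] b; have [_ Hu] := qb_prop HD2 Hq.
have E := @inT_eval q.2 (fun a a' => a * al a') _ _ _ _ _ Hu b.
- rewrite /rq mulr_sumr mulr_suml; cbv beta in E.
  rewrite (eq_bigr (fun p => i b * p.1 * al p.2)) ?E; last by move=> p _; rewrite mulrA.
  by apply: eq_bigr => p _; rewrite Ha3 mulrA.
- by move=> a a' a''; rewrite mulrDl.
- by move=> a a' a''; rewrite Ha1 mulrDr.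
- by move=> a; rewrite mul0r.
- by move=> a; rewrite (add0 Ha1) mulr0.
- by move=> a b' a'; rewrite Ha2 mulrA.
Qed.

Lemma D2_mul (al : A -> A) : is_add al -> (forall b x, al (i b * x) = i b * al x) ->
  forall a a', a * al a' = \sum_(k <- Lq) a * k.2 a' * k.1.1 * al k.1.2.
Proof.
move=> HS1 HS2; apply: (D2_evalA HD2 (phi := fun a a' => a * al a')).
- by move=> a a' a''; rewrite mulrDl.
- by move=> a a' a''; rewrite HS1 mulrDr.
- by move=> a; rewrite mul0r.
- by move=> a; rewrite (add0 HS1) mulr0.
- by move=> a b a'; rewrite HS2 mulrA.
Qed.

Definition Gq (f g : A -> A) (q : (A -> A) * seq (A * A)) :=
  (fun x => \sum_(p <- q.2) p.1 * f (p.2 * x)) \o g.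

Lemma Gq_isE f g q : isE i f -> isE i g -> List.In q qb -> isE i (Gq f g q).
Proof.
move=> [Hf1 Hf2] Hg Hq; have [_ Hu] := qb_prop HD2 Hq.
suff H : isE i (fun x => \sum_(p <- q.2) p.1 * f (p.2 * x)) by apply: isE_comp.
split.
- move=> x y; rewrite -big_split; apply: eq_bigr => p _ /=.
  by rewrite mulrDr Hf1 mulrDr.
- move=> b x.
  pose phi := fun a a' => a * f (a' * x).
  have H1 : forall a a' a'', phi (a + a') a'' = phi a a'' + phi a' a''.
    by move=> a a' a''; rewrite /phi mulrDl.
  have H2 : forall a a' a'', phi a (a' + a'') = phi a a' + phi a a''.
    by move=> a a' a''; rewrite /phi [(a' + a'') * x]mulrDl Hf1 mulrDr.
  have H3 : forall a, phi 0 a = 0 by move=> a; rewrite /phi mul0r.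
  have H4 : forall a, phi a 0 = 0 by move=> a; rewrite /phi mul0r (add0 Hf1) mulr0.
  have H5 : forall a b a', phi (a * i b) a' = phi a (i b * a').
    by move=> a b' a'; rewrite /phi -(mulrA (i b')) Hf2 mulrA.
  have E := inT_eval H1 H2 H3 H4 H5 Hu b.
  rewrite /phi in E; rewrite mulr_sumr.
  transitivity (\sum_(p <- q.2) i b * p.1 * f (p.2 * x)); last first.
    by apply: eq_bigr => p _; rewrite mulrA.
  rewrite E; apply: eq_bigr => p _; by rewrite mulrA.
Qed.

Lemma galois_eq U : galois_map qb U =
  flatten [seq [seq (q.1, Gq fg.1 fg.2 q) | q <- qb] | fg <- U].
Proof.
rewrite /galois_map /coactS; congr flatten; apply: eq_map => fg.
by rewrite -map_comp.
Qed.

Lemma partB U : EE_inv i U -> teqSE i (galois_map qb U) [:: (Phi U, idfun)].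
Proof.
move=> HU; have [/all_propP HE _] := HU.
rewrite galois_eq.
have := @cg_collect _ _ SE_cong _ _ (fun (a : A -> A) (q : (A -> A) * seq (A * A)) => (q.1, a))
    (@fadd A) (@fzero A) (isE i) (fun q => isS i q.1) _ _ _ _ _
    (fun fg q => Gq fg.1 fg.2 q) U qb.
move=> H; apply: (cg_trans SE_cong (H _ _ _ _ _ _)).
- by move=> a b k Ha Hb Hk; apply: SE_addr.
- by move=> k Hk; apply: SE_zr.
- exact: isE_fadd.
- exact: isE_fzero.
- by move=> q Hq; case: (qb_prop HD2 Hq).
- move=> fg q Hfg Hq; case: (HE fg Hfg) => H1 H2; exact: Gq_isE.
apply: (cg_trans SE_cong (t := [seq (rho (rq q (Phi U)) \o q.1, idfun) | q <- qb])).
- apply: (cg_map SE_cong) => q Hq.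
  match goal with |- teqSE _ [:: ?x] _ => have -> : x = (q.1, lam (rq q (Phi U)) \o idfun) end.
    congr pair; apply: functional_extensionality => y.
    rewrite -/(fsum _) fsum_eval big_map /Gq /= exchange_big /= /lam /rq mulr_suml.
    apply: eq_bigr => p _; rewrite -mulr_sumr -mulrA; congr (_ * _).
    by rewrite -(INV1 HU).
  apply: (cg_sym SE_cong); apply: SE_bal.
  + by case: (qb_prop HD2 Hq).
  + apply: rq_inR => //; exact: partC.
  + exact: isE_id.
- have := @cg_fold _ _ SE_cong _ _ (fun (a h : A -> A) => (a, h)) (@fadd A) (@fzero A)
    (isS i) (isE i) _ _ _ _ _ (fun q => rho (rq q (Phi U)) \o q.1) idfun qb.
  move=> H2; apply: (cg_trans SE_cong (H2 _ _ _ _ _ _)).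
  + by move=> a b h Ha Hb Hh; apply: SE_addl.
  + by move=> h Hh; apply: SE_zl.
  + exact: isS_fadd.
  + exact: isS_fzero.
  + exact: isE_id.
  + move=> q Hq; apply: isS_rhol; first by apply: rq_inR => //; exact: partC.
    by case: (qb_prop HD2 Hq).
  match goal with |- teqSE _ [:: ?x] _ => have -> : x = (Phi U, idfun) end;
    last exact: (cg_refl SE_cong).
  congr pair; apply: functional_extensionality => x.
  rewrite -/(fsum _) fsum_eval big_map.
  have [HS _] := partC HU; have [HS1 HS2] := HS.
  have := D2_mul HS1 HS2 1 x; rewrite mul1r => ->; rewrite sum_L.
  apply: eq_bigr => q _; rewrite /= /rho /rq mulr_sumr; apply: eq_bigr => p _.
  by rewrite mul1r !mulrA.
Qed.

End Galois.

Section EEE.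
Variables (A B : pzRingType) (i : B -> A) (qb : seq ((A -> A) * seq (A * A))).
Hypothesis HD2 : right_D2_quasibase i qb.
Notation Lq := (Lq qb).

Lemma EEE_cong : is_cong (teqEEE i). Proof. exact: tens3_is_cong. Qed.
Lemma EEE_add1 m m' n p : isE i m -> isE i m' -> isE i n -> isE i p ->
  teqEEE i [:: (fadd m m', n, p)] [:: (m, n, p); (m', n, p)].
Proof. by move=> *; apply: t3e_gen; apply: t3_add1. Qed.
Lemma EEE_add2 m n n' p : isE i m -> isE i n -> isE i n' -> isE i p ->
  teqEEE i [:: (m, fadd n n', p)] [:: (m, n, p); (m, n', p)].
Proof. by move=> *; apply: t3e_gen; apply: t3_add2. Qed.
Lemma EEE_add3 m n p p' : isE i m -> isE i n -> isE i p -> isE i p' ->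
  teqEEE i [:: (m, n, fadd p p')] [:: (m, n, p); (m, n, p')].
Proof. by move=> *; apply: t3e_gen; apply: t3_add3. Qed.
Lemma EEE_z1 n p : isE i n -> isE i p -> teqEEE i [:: (@fzero A, n, p)] [::].
Proof. by move=> *; apply: t3e_gen; apply: t3_z1. Qed.
Lemma EEE_z2 m p : isE i m -> isE i p -> teqEEE i [:: (m, @fzero A, p)] [::].
Proof. by move=> *; apply: t3e_gen; apply: t3_z2. Qed.
Lemma EEE_z3 m n : isE i m -> isE i n -> teqEEE i [:: (m, n, @fzero A)] [::].
Proof. by move=> *; apply: t3e_gen; apply: t3_z3. Qed.
Lemma EEE_bal1 m a n p : isE i m -> isE i n -> isE i p ->
  teqEEE i [:: (m \o rho a, n, p)] [:: (m, rho a \o n, p)].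
Proof. by move=> *; apply: t3e_gen; apply: t3_bal1. Qed.
Lemma EEE_bal2 m n a p : isE i m -> isE i n -> isE i p ->
  teqEEE i [:: (m, n \o rho a, p)] [:: (m, n, rho a \o p)].
Proof. by move=> *; apply: t3e_gen; apply: t3_bal2. Qed.

Definition Ev (s : seq ((A -> A) * (A -> A) * (A -> A))) x y z :=
  \sum_(t <- s) t.1.1 (x * t.1.2 (y * t.2 z)).

Lemma Ev_teq s t : teqEEE i s t -> forall x y z, Ev s x y z = Ev t x y z.
Proof.
move=> H x y z; rewrite /Ev.
apply: (tens3_eval (phi := fun t => t.1.1 (x * t.1.2 (y * t.2 z)))) H => /=.
- by [].
- by move=> m n n' p [Hm _] _ _ _; rewrite /fadd mulrDr Hm.
- by move=> m n p p' [Hm _] [Hn _] _ _; rewrite /fadd mulrDr Hn mulrDr Hm.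
- by [].
- by move=> m p [Hm _] _; rewrite /fzero mulr0 add0.
- by move=> m n [Hm _] [Hn _]; rewrite /fzero mulr0 (add0 Hn) mulr0 (add0 Hm).
- by move=> m r n p _ _ _ _; rewrite /rho mulrA.
- by move=> m n r p _ _ _ _; rewrite /rho mulrA.
Qed.

Definition LL := flatten [seq [seq (k, k') | k <- Lq] | k' <- Lq].

Lemma LL_flat (X : Type) (P : (A * A) * (A -> A) -> (A * A) * (A -> A) -> X) :
  flatten [seq [seq P k k' | k <- Lq] | k' <- Lq] = [seq P kk.1 kk.2 | kk <- LL].
Proof.
rewrite /LL map_flatten -map_comp; congr flatten; apply: eq_map => k' /=.
by rewrite -map_comp.
Qed.

Lemma In_LL kk : List.In kk LL -> List.In kk.1 Lq /\ List.In kk.2 Lq.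
Proof.
move=> H; have [k' [Hk' H2]] := In_flatten H.
by move: H2 => /List.in_map_iff [k [<- Hk]].
Qed.

Lemma step3 f g h : isE i f -> isE i g -> isE i h ->
  teqEEE i [:: (f, g, h)]
    [seq (f \o rho (kk.1.1.1 * g (kk.1.1.2 * (kk.2.1.1 * h kk.2.1.2))), kk.1.2, kk.2.2)
      | kk <- LL].
Proof.
move=> Hf Hg Hh.
have HL : forall k, List.In k Lq -> isE i k.2.
  by move=> k Hk; apply: isS_E; apply: (In_L HD2).
apply: (cg_trans EEE_cong (t := [seq (f, g, rho (k'.1.1 * h k'.1.2) \o k'.2) | k' <- Lq])).
  rewrite {1}(expand_E HD2 Hh); apply: (cg_sym EEE_cong).
  apply: (@cg_fold _ _ EEE_cong _ _ (fun (a : A -> A) (fg : (A -> A) * (A -> A)) => (fg.1, fg.2, a))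
     (@fadd A) (@fzero A) (isE i) (fun fg => isE i fg.1 /\ isE i fg.2) _ _ _ _ _
     (fun k : (A * A) * (A -> A) => rho (k.1.1 * h k.1.2) \o k.2) (f, g) Lq).
  + by move=> a b fg Ha Hb [H1 H2]; apply: EEE_add3.
  + by move=> fg [H1 H2]; apply: EEE_z3.
  + exact: isE_fadd.
  + exact: isE_fzero.
  + by [].
  + by move=> k Hk; apply: isE_rhol; apply: HL.
apply: (cg_trans EEE_cong (t := [seq (f, g \o rho (k'.1.1 * h k'.1.2), k'.2) | k' <- Lq])).
  apply: (cg_map EEE_cong) => k' Hk'; apply: (cg_sym EEE_cong); apply: EEE_bal2 => //.
  exact: HL.
rewrite -(LL_flat (fun k k' => (f \o rho (k.1.1 * g (k.1.2 * (k'.1.1 * h k'.1.2))), k.2, k'.2))) -flatten_map1.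
apply: (cg_flatten EEE_cong) => k' Hk'.
set g' := g \o rho (k'.1.1 * h k'.1.2).
have Hg' : isE i g' by apply: isE_rhor.
apply: (cg_trans EEE_cong (t := [seq (f, rho (k.1.1 * g' k.1.2) \o k.2, k'.2) | k <- Lq])).
  rewrite {1}(expand_E HD2 Hg'); apply: (cg_sym EEE_cong).
  apply: (@cg_fold _ _ EEE_cong _ _ (fun (a : A -> A) (fg : (A -> A) * (A -> A)) => (fg.1, a, fg.2))
     (@fadd A) (@fzero A) (isE i) (fun fg => isE i fg.1 /\ isE i fg.2) _ _ _ _ _
     (fun k : (A * A) * (A -> A) => rho (k.1.1 * g' k.1.2) \o k.2) (f, k'.2) Lq).
  + by move=> a b fg Ha Hb [H1 H2]; apply: EEE_add2.
  + by move=> fg [H1 H2]; apply: EEE_z2.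
  + exact: isE_fadd.
  + exact: isE_fzero.
  + by split => //; apply: HL.
  + by move=> k Hk; apply: isE_rhol; apply: HL.
apply: (cg_map EEE_cong) => k Hk; apply: (cg_sym EEE_cong).
rewrite /g' /=; apply: EEE_bal1 => //; exact: HL.
Qed.

Definition E3_elt (s : seq ((A -> A) * (A -> A) * (A -> A))) :=
  all_prop (fun t => isE i t.1.1 /\ isE i t.1.2 /\ isE i t.2) s.

Lemma NF3 s : E3_elt s ->
  teqEEE i s [seq (fun z => Ev s (z * kk.1.1.1) (kk.1.1.2 * kk.2.1.1) kk.2.1.2, kk.1.2, kk.2.2)
     | kk <- LL].
Proof.
move=> /all_propP Hs.
have HL : forall k, List.In k Lq -> isE i k.2.
  by move=> k Hk; apply: isS_E; apply: (In_L HD2).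
apply: (cg_trans EEE_cong (t := flatten [seq
   [seq (t.1.1 \o rho (kk.1.1.1 * t.1.2 (kk.1.1.2 * (kk.2.1.1 * t.2 kk.2.1.2))), kk.1.2, kk.2.2)
      | kk <- LL] | t <- s])).
- rewrite -{1}(flatten_seq1 s).
  apply: (cg_flatten EEE_cong) => t Ht; case: (Hs t Ht) => H1 [H2 H3].
  by case: t {Ht} H1 H2 H3 => [[f g] h] H1 H2 H3; apply: step3.
- have := @cg_collect _ _ EEE_cong _ _
    (fun (a : A -> A) (kk : ((A*A)*(A->A)) * ((A*A)*(A->A))) => (a, kk.1.2, kk.2.2))
    (@fadd A) (@fzero A) (isE i) (fun kk => isE i kk.1.2 /\ isE i kk.2.2) _ _ _ _ _
    (fun t kk => t.1.1 \o rho (kk.1.1.1 * t.1.2 (kk.1.1.2 * (kk.2.1.1 * t.2 kk.2.1.2)))) s LL.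
  move=> H; apply: (cg_trans EEE_cong (H _ _ _ _ _ _)).
  + by move=> a b kk Ha Hb [H1 H2]; apply: EEE_add1.
  + by move=> kk [H1 H2]; apply: EEE_z1.
  + exact: isE_fadd.
  + exact: isE_fzero.
  + by move=> kk /In_LL [H1 H2]; split; apply: HL.
  + move=> t kk Ht _; apply: isE_rhor; by case: (Hs t Ht).
  + apply: (cg_map EEE_cong) => kk _.
    match goal with |- teqEEE _ [:: ?x] [:: ?y] => have -> : x = y end;
      last exact: (cg_refl EEE_cong).
    congr (_, _, _); apply: functional_extensionality => z.
    rewrite -/(fsum _) fsum_eval big_map /Ev; apply: eq_bigr => t _; by rewrite /rho /= !mulrA.
Qed.

Lemma KEY3 s t : E3_elt s -> E3_elt t ->
  (forall x y z, Ev s x y z = Ev t x y z) -> teqEEE i s t.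
Proof.
move=> Hs Ht E.
have E' : Ev s = Ev t.
  apply: functional_extensionality => x; apply: functional_extensionality => y.
  by apply: functional_extensionality => z.
apply: (cg_trans EEE_cong (NF3 Hs)); rewrite E'.
exact: (cg_sym EEE_cong (NF3 Ht)).
Qed.

End EEE.

Section Comult.
Variables (A B : pzRingType) (i : B -> A) (qb : seq ((A -> A) * seq (A * A))).
Hypothesis HD2 : right_D2_quasibase i qb.
Notation Lq := (Lq qb).

Definition WInv (W : seq (seq ((A -> A) * (A -> A)) * seq ((A -> A) * (A -> A)))) :=
  all_prop (fun w => EE_inv i w.1 /\ EE_inv i w.2) W.

Lemma Ev_TT W : WInv W -> forall x y z,
  Ev (TT_to_EEE W) x y z = \sum_(w <- W) Phi w.1 x * (Phi w.2 y * z).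
Proof.
move=> /all_propP HW x y z.
rewrite /Ev /TT_to_EEE big_flatten big_map; apply: sum_ext_in => w Hw.
have [H1 H2] := HW w Hw; have [/all_propP HE1 _] := H1.
rewrite -(INV1 H1) -(INV1 H2) /Ut big_flatten big_map; apply: sum_ext_in => p Hp.
have [[Hp1 _] [Hp2 _]] := HE1 p Hp.
rewrite big_map (@add_sum A _ p.2) // mulr_sumr (@add_sum A _ p.1) //.
Qed.

Lemma D2_mul2 (al : A -> A) : is_add al -> (forall b x, al (i b * x) = i b * al x) ->
  forall y a a', a * al (a' * y) = \sum_(k <- Lq) a * k.2 a' * k.1.1 * al (k.1.2 * y).
Proof.
move=> HS1 HS2 y; apply: (D2_evalA HD2 (phi := fun a a' => a * al (a' * y))).
- by move=> a a' a''; rewrite mulrDl.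
- by move=> a a' a''; rewrite mulrDl HS1 mulrDr.
- by move=> a; rewrite mul0r.
- by move=> a; rewrite mul0r (add0 HS1) mulr0.
- by move=> a b a'; rewrite -(mulrA (i b)) HS2 mulrA.
Qed.

Definition alq (al : A -> A) (q : (A -> A) * seq (A * A)) :=
  fun x => \sum_(p <- q.2) p.1 * al (p.2 * x).

Lemma alq_S al q : isS i al -> List.In q qb -> isS i (alq al q).
Proof.
move=> Hal Hq; split.
- have H := Gq_isE HD2 (isS_E Hal) (@isE_id A B i) Hq; exact H.
- move=> b x; rewrite /alq mulr_suml; apply: eq_bigr => p _.
  by case: Hal => _ H3; rewrite mulrA H3 mulrA.
Qed.

Lemma Phi_Psi al : isS i al -> Phi (Psi qb al) = al.
Proof.
move=> Hal; apply: functional_extensionality => x.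
by rewrite Phi_Ut (Psi_Ut HD2 Hal) mulr1.
Qed.

Lemma E3_TT W : WInv W -> E3_elt i (TT_to_EEE W).
Proof.
move=> /all_propP HW; apply/all_propP => t Ht.
have [w [Hw Ht']] := In_flatten Ht.
have [p [Hp Ht'']] := In_flatten Ht'.
move: Ht'' => /List.in_map_iff [q [<- Hq]] /=.
have [[/all_propP H1 _] [/all_propP H2 _]] := HW w Hw.
have [Hp1 Hp2] := H1 p Hp; have [Hq1 Hq2] := H2 q Hq.
by split; [|split]; try apply: isE_comp.
Qed.

Lemma E3_U U : EE_elt i U -> E3_elt i [seq (p.1, idfun, p.2) | p <- U].
Proof.
move=> /all_propP HU; apply/all_propP => t /List.in_map_iff [p [<- Hp]] /=.
have [H1 H2] := HU p Hp; by split; [|split].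
Qed.

Lemma Ev_U U : EE_inv i U -> forall x y z,
  Ev [seq (p.1, idfun, p.2) | p <- U] x y z = Phi U (x * y) * z.
Proof.
move=> HU x y z; rewrite -(INV1 HU) /Ev /Ut big_map; apply: eq_bigr => p _.
by rewrite /= mulrA.
Qed.

Lemma partL_exist U : EE_inv i U ->
  exists W, all_prop (fun w => EE_inv i w.1 /\ EE_inv i w.2) W /\
     teqEEE i (TT_to_EEE W) [seq (p.1, idfun, p.2) | p <- U].
Proof.
move=> HU; have HS := partC HU; set al := Phi U in HS *.
exists [seq (Psi qb q.1, Psi qb (alq al q)) | q <- qb].
have HW : WInv [seq (Psi qb q.1, Psi qb (alq al q)) | q <- qb].
  apply/all_propP => w /List.in_map_iff [q [<- Hq]] /=.
  have [Hq1 _] := qb_prop HD2 Hq.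
  by split; apply: (Psi_inv HD2); [|apply: alq_S].
split => //.
apply: (KEY3 HD2); [exact: E3_TT | apply: E3_U; by case: HU |].
move=> x y z; rewrite (Ev_TT HW) (Ev_U HU) big_map.
have [[HS1 HS2] _] := HS.
rewrite -[Phi U (x * y)]mul1r (D2_mul2 HS1 HS2) sum_L mulr_suml.
apply: sum_ext_in => q Hq /=.
have [Hq1 _] := qb_prop HD2 Hq.
rewrite (Phi_Psi Hq1) (Phi_Psi (alq_S HS Hq)) /alq !mulr_suml mulr_sumr.
apply: eq_bigr => p _; by rewrite mul1r !mulrA.
Qed.

Lemma SS_cong : is_cong (teqSS i). Proof. exact: tens_is_cong. Qed.
Lemma SS_addl m m' n : isS i m -> isS i m' -> isS i n ->
  teqSS i [:: (fadd m m', n)] [:: (m, n); (m', n)].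
Proof. by move=> *; apply: te_gen; apply: tg_addl. Qed.
Lemma SS_addr m n n' : isS i m -> isS i n -> isS i n' ->
  teqSS i [:: (m, fadd n n')] [:: (m, n); (m, n')].
Proof. by move=> *; apply: te_gen; apply: tg_addr. Qed.
Lemma SS_zl n : isS i n -> teqSS i [:: (@fzero A, n)] [::].
Proof. by move=> *; apply: te_gen; apply: tg_zl. Qed.
Lemma SS_zr m : isS i m -> teqSS i [:: (m, @fzero A)] [::].
Proof. by move=> *; apply: te_gen; apply: tg_zr. Qed.
Lemma SS_bal m r n : isS i m -> inR i r -> isS i n ->
  teqSS i [:: (rho r \o m, n)] [:: (m, lam r \o n)].
Proof. by move=> *; apply: te_gen; apply: tg_bal. Qed.

Lemma expand_S be : isS i be -> be = fsum [seq rho (rq q be) \o q.1 | q <- qb].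
Proof.
move=> [[HS1 HS2] _]; apply: functional_extensionality => x.
rewrite fsum_eval big_map.
have := D2_mul HD2 HS1 HS2 1 x; rewrite mul1r => ->; rewrite sum_L.
apply: eq_bigr => q _; rewrite /= /rho /rq mulr_sumr; apply: eq_bigr => p _.
by rewrite mul1r !mulrA.
Qed.

Lemma qS q : List.In q qb -> isS i q.1.
Proof. by move=> Hq; case: (qb_prop HD2 Hq). Qed.

Lemma stepSS be be' : isS i be -> isS i be' ->
  teqSS i [:: (be, be')] [seq (q.1, lam (rq q be) \o be') | q <- qb].
Proof.
move=> Hb Hb'.
apply: (cg_trans SS_cong (t := [seq (rho (rq q be) \o q.1, be') | q <- qb])).
- rewrite {1}(expand_S Hb); apply: (cg_sym SS_cong).
  apply: (@cg_fold _ _ SS_cong _ _ (fun (a h : A -> A) => (a, h)) (@fadd A)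
     (@fzero A) (isS i) (isS i) _ _ _ _ _
     (fun q : (A -> A) * seq (A * A) => rho (rq q be) \o q.1) be' qb).
  + by move=> a b h Ha Hb1 Hh; apply: SS_addl.
  + by move=> h Hh; apply: SS_zl.
  + exact: isS_fadd.
  + exact: isS_fzero.
  + exact: Hb'.
  + by move=> q Hq; apply: isS_rhol; [apply: (rq_inR HD2) | apply: qS].
- apply: (cg_map SS_cong) => q Hq; apply: SS_bal; first exact: qS.
  + exact: (rq_inR HD2).
  + exact: Hb'.
Qed.

Lemma NF_SS (Ws : seq ((A -> A) * (A -> A))) :
  all_prop (fun w => isS i w.1 /\ isS i w.2) Ws ->
  teqSS i Ws [seq (q.1, fsum [seq lam (rq q w.1) \o w.2 | w <- Ws]) | q <- qb].
Proof.
move=> /all_propP HW.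
apply: (cg_trans SS_cong (t := flatten [seq [seq (q.1, lam (rq q w.1) \o w.2) | q <- qb] | w <- Ws])).
- rewrite -{1}(flatten_seq1 Ws).
  apply: (cg_flatten SS_cong) => w Hw; case: (HW w Hw) => H1 H2.
  by case: w {Hw} H1 H2 => b b' H1 H2; apply: stepSS.
- have := @cg_collect _ _ SS_cong _ _ (fun (a : A -> A) (q : (A -> A) * seq (A * A)) => (q.1, a))
    (@fadd A) (@fzero A) (isS i) (fun q => isS i q.1) _ _ _ _ _
    (fun w q => lam (rq q w.1) \o w.2) Ws qb.
  move=> H; apply: (cg_trans SS_cong (H _ _ _ _ _ _)).
  + by move=> a b k Ha Hb Hk; apply: SS_addr.
  + by move=> k Hk; apply: SS_zr.
  + exact: isS_fadd.
  + exact: isS_fzero.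
  + exact: qS.
  + move=> w q Hw Hq; case: (HW w Hw) => H1 H2; apply: isS_lam => //.
    exact: (rq_inR HD2).
  + exact: (cg_refl SS_cong).
Qed.

Lemma partL_uniq U W : EE_inv i U -> WInv W ->
  teqEEE i (TT_to_EEE W) [seq (p.1, idfun, p.2) | p <- U] ->
  teqSS i [seq (Phi w.1, Phi w.2) | w <- W] (DeltaS qb (Phi U)).
Proof.
move=> HU HW H.
have Hsum : forall x y, \sum_(w <- W) Phi w.1 x * Phi w.2 y = Phi U (x * y).
  move=> x y; have := Ev_teq H x y 1; rewrite (Ev_TT HW) (Ev_U HU) mulr1 => <-.
  by apply: eq_bigr => w _; rewrite mulr1.
have HWs : all_prop (fun w => isS i w.1 /\ isS i w.2) [seq (Phi w.1, Phi w.2) | w <- W].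
  move: HW => /all_propP HW; apply/all_propP => w' /List.in_map_iff [w [<- Hw]] /=.
  by case: (HW w Hw) => H1 H2; split; apply: partC.
apply: (cg_trans SS_cong (NF_SS HWs)).
rewrite /DeltaS /coactS.
match goal with |- teqSS _ ?x ?y => have -> : x = y end; first last.
  exact: (cg_refl SS_cong).
apply: eq_map => q; congr pair; apply: functional_extensionality => y.
rewrite fsum_eval !big_map /= /lam /rq.
under eq_bigr do rewrite mulr_suml.
rewrite exchange_big /=; apply: eq_bigr => p _.
by rewrite -Hsum mulr_sumr; apply: eq_bigr => w _; rewrite mulrA.
Qed.

End Comult.

Theorem corollary5p4 (A B : pzRingType) (i : {rmorphism B -> A})
    (qb : seq ((A -> A) * seq (A * A))) :
  right_D2_quasibase i qb ->
  (* Phi is well defined on E (x)_{rho(A)} E *)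
  (forall U V, EE_elt i U -> EE_elt i V -> teqEE i U V -> Phi U = Phi V) /\
  (* beta restricted to invariants is U |-> Phi(U) (x) 1 in S (x)_R E *)
  (forall U, EE_inv i U -> teqSE i (galois_map qb U) [:: (Phi U, idfun)]) /\
  (* Phi maps invariants into S, bijectively *)
  (forall U, EE_inv i U -> isS i (Phi U)) /\
  (forall U V, EE_inv i U -> EE_inv i V -> Phi U = Phi V -> teqEE i U V) /\
  (forall al, isS i al -> exists U, EE_inv i U /\ Phi U = al) /\
  (* algebra isomorphism for the product U.V = U^1 o V^1 (x) V^2 o U^2 *)
  (forall U V, EE_inv i U -> EE_inv i V ->
     EE_inv i (EE_mul U V) /\ Phi (EE_mul U V) = Phi U \o Phi V) /\
  Phi [:: (idfun : A -> A, idfun : A -> A)] = idfun /\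
  (* base identification E^{rho(A)} = End(_B A_A) ~ R via f |-> f 1 *)
  (forall f, inEbase i f -> inR i (f 1) /\ f = lam (f 1)) /\
  (forall r, inR i r -> inEbase i (lam r)) /\
  (* source and target *)
  (forall f, inEbase i f ->
     Phi [:: (f, idfun)] = lam (f 1) /\ Phi [:: (idfun, f)] = rho (f 1)) /\
  (* counit: eps_T(U) = U^1 o U^2, eps_S(al) = al 1 *)
  (forall U, EE_inv i U -> Phi U 1 = \sum_(p <- U) (p.1 \o p.2) 1) /\
  (* comultiplication: Delta_T(U) is (the class of) any W in T (x) T whose
     image in E (x) E (x) E is U^1 (x) 1 (x) U^2 *)
  (forall U, EE_inv i U ->
     (exists W, all_prop (fun w => EE_inv i w.1 /\ EE_inv i w.2) W /\
        teqEEE i (TT_to_EEE W) [seq (p.1, idfun, p.2) | p <- U]) /\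
     (forall W, all_prop (fun w => EE_inv i w.1 /\ EE_inv i w.2) W ->
        teqEEE i (TT_to_EEE W) [seq (p.1, idfun, p.2) | p <- U] ->
        teqSS i [seq (Phi w.1, Phi w.2) | w <- W] (DeltaS qb (Phi U)))).
Proof.
move=> HD2.
split; first exact: partA.
split; first exact: (partB HD2).
split; first exact: partC.
split; first exact: (partD HD2).
split; first exact: (partE HD2).
split; first exact: (partF HD2).
split; first exact: partG.
split; first exact: partH.
split; first exact: partI.
split; first exact: partJ.
split; first exact: partK.
move=> U HU; split; first exact: (partL_exist HD2 HU).
move=> W HW H; exact: (partL_uniq HD2 HU HW H).
Qed.
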